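(* Let $F=(n_F)_{n\ge 1}$ be a sequence belonging to the family $\mathcal{T}_\lambda$. Then $F$ is a cobweb tiling sequence: $F$ is admissible, and for all positive integers $m\le n$ the $F$-box $V_{m,n}$ has a tiling by sub-boxes of the forms $\sigma V_m$.
   Context: Throughout, $\mathbb{N}=\{1,2,\dots\}$. For a sequence of natural numbers $F=(n_F)$ write $[s_F]=\{1,2,\dots,s_F\}$ and $n_F!=n_F\cdot(n-1)_F\cdots 1_F$, with $0_F!=1$. The $F$-nomial coefficient is $\binom{n}{m}_F=\frac{n_F!}{m_F!\,(n-m)_F!}$ for $0\le m\le n$. $F$ is admissible if $\binom{n}{m}_F\in\mathbb{N}\cup\{0\}$ for all $0\le m\le n$. The $F$-box: for $1\le m\le n$ and $k=n-m+1$, let $V_{m,n}=[k_F]\times[(k+1)_F]\times\cdots\times[n_F]\subset\mathbb{N}^m$. Sub-box of the form $\sigma V_m$: for a permutation $\sigma$ of $\{1,\dots,m\}$, this is a set $A=A_1\times\cdots\times A_m$ with $A_s\subseteq[(k+s-1)_F]$ and $|A_s|=(\sigma(s))_F$ for $s=1,\dots,m$. Tiling of $V_{m,n}$: a finite family of pairwise disjoint sub-boxes, each of the form $\sigma V_m$ for some permutation $\sigma$ (which may depend on the sub-box), whose union is $V_{m,n}$. Equivalently, in cobweb language, this is a partition of the maximal paths of the cobweb layer $\langle\Phi_k\to\Phi_n\rangle$ into blocks $\sigma P_m$. A cobweb tiling sequence is an admissible sequence $F$ such that $V_{m,n}$ has a tiling for all $1\le m\le n$. The family $\mathcal{T}_\lambda$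 consists of sequences $F=(n_F)_{n\ge1}$ of natural numbers for which there exist functions $\lambda_K,\lambda_M:\mathbb{N}\times\mathbb{N}\to\mathbb{N}\cup\{0\}$ such that $(k+m)_F=\lambda_K(k,m)\,k_F+\lambda_M(k,m)\,m_F$ for all $k,m\in\mathbb{N}$. *)

(* Defs.v *)
From mathcomp Require Import all_boot all_order all_fingroup.
From mathcomp Require Import finmap.
Unset Printing Implicit Defensive.


(* A sequence F = (n_F)_{n>=1} is modelled as F : nat -> nat; the value F 0
   is irrelevant.  Membership in N = {1,2,...} is the hypothesis [Fpos]. *)
Definition Fpos (F : nat -> nat) : Prop := forall n, 0 < n -> 0 < F n.

Definition Ffact (F : nat -> nat) (n : nat) : nat := \prod_(1 <= i < n.+1) F i.

(* binom(n,m)_F = n_F! / (m_F! (n-m)_F!) is a natural number (or 0). *)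
Definition admissible (F : nat -> nat) : Prop :=
  forall n m, m <= n -> exists c : nat, Ffact F n = c * (Ffact F m * Ffact F (n - m)).

Definition T_lambda (F : nat -> nat) : Prop :=
  exists lamK lamM : nat -> nat -> nat,
    forall k m, 0 < k -> 0 < m -> F (k + m) = lamK k m * F k + lamM k m * F m.

(* Coordinates are indexed 0-based by s : 'I_m; coordinate s (1-based s+1)
   ranges over [(k+s)_F] with k = n-m+1.  A point is a function 'I_m -> nat. *)
Definition in_Fbox (F : nat -> nat) (m n : nat) (x : 'I_m -> nat) : Prop :=
  forall s : 'I_m, 1 <= x s <= F (n - m + 1 + s).

Definition subbox (m : nat) : Type := ('S_m * ('I_m -> {fset nat}))%type.

Definition in_subbox (m : nat) (B : subbox m) (x : 'I_m -> nat) : Prop :=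
  forall s : 'I_m, x s \in B.2 s.

Definition is_sigma_subbox (F : nat -> nat) (m n : nat) (B : subbox m) : Prop :=
  forall s : 'I_m,
    (forall a, a \in B.2 s -> 1 <= a <= F (n - m + 1 + s)) /\
    (#|` B.2 s|)%fset = F (B.1 s).+1.

Definition subbox0 (m : nat) : subbox m := (1%g, fun _ => fset0%fset).

Definition tiling (F : nat -> nat) (m n : nat) (T : seq (subbox m)) : Prop :=
  (forall i, i < size T -> is_sigma_subbox F m n (nth (subbox0 m) T i)) /\
  (forall i j, i < size T -> j < size T -> i <> j ->
     forall x, ~ (in_subbox m (nth (subbox0 m) T i) x /\
                  in_subbox m (nth (subbox0 m) T j) x)) /\
  (forall x : 'I_m -> nat,
     in_Fbox F m n x <-> exists2 i, i < size T & in_subbox m (nth (subbox0 m) T i) x).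

Definition cobweb_tiling (F : nat -> nat) : Prop :=
  admissible F /\
  forall m n, 1 <= m -> m <= n -> exists T : seq (subbox m), tiling F m n T.

(* Main.v *)
Require Import Defs.
From mathcomp Require Import all_boot all_order all_fingroup.
From mathcomp Require Import finmap zify.
Set Implicit Arguments.
Unset Strict Implicit.
Open Scope fset_scope.

Definition I (o l : nat) : {fset nat} := [fset x in iota o l].
Lemma in_I x o l : (x \in I o l) = (o <= x < o + l)%N.
Proof. by rewrite /I in_fset /= mem_iota. Qed.
Lemma card_I o l : #|` I o l| = l.
Proof. by rewrite /I card_fseq undup_id ?iota_uniq // size_iota. Qed.
Lemma card_imf (f : nat -> nat) (A : {fset nat}) : injective f -> #|` [fset f x | x in A]| = #|` A|.
Proof. move=> fi. rewrite card_imfset //=. Qed.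

Lemma memf (f g : nat -> nat) (A : {fset nat}) x : cancel f g ->
  (x \in [fset f a | a in A]) = (f (g x) == x) && (g x \in A).
Proof.
move=> fK; apply/imfsetP/andP => /=.
  by case=> a aA ->; rewrite fK; split.
by case=> /eqP e gA; exists (g x).
Qed.

Lemma count_and T (c : bool) (p : pred T) s : count (fun B => c && p B) s = c * count p s.
Proof. by case: c => /=; rewrite ?mul1n ?mul0n ?count_pred0 //; apply: eq_count. Qed.

Lemma forall_perm m (r : 'S_m) (P : pred 'I_m) : [forall s, P (r s)] = [forall s, P s].
Proof.
apply/forallP/forallP => H t; last exact: H.
by rewrite -(permKV r t); apply: H.
Qed.

Lemma forall_lift m' (P : pred 'I_m'.+1) :
  [forall s, P s] = [forall j, P (lift ord_max j)] && P ord_max.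
Proof.
apply/forallP/andP => [H|[/forallP H1 H2] s]; first by split=> //; apply/forallP.
by case: (unliftP ord_max s) => [j ->|->].
Qed.

Section Gen.
Variable d : nat -> nat.

Definition insb m (B : subbox m) (x : 'I_m -> nat) : bool := [forall s, x s \in B.2 s].
Definition inboxb m (C : 'I_m -> {fset nat}) x : bool := [forall s, x s \in C s].
Definition tok m (C : 'I_m -> {fset nat}) (B : subbox m) : bool :=
  [forall s, (B.2 s `<=` C s) && (#|` B.2 s| == d (B.1 s))].
Definition gtile m (C : 'I_m -> {fset nat}) (T : seq (subbox m)) :=
  all (tok C) T /\ forall x, count (fun B => insb B x) T = inboxb C x.

Lemma gtile_ext m (C C' : 'I_m -> {fset nat}) T :
  (forall s, C s = C' s) -> gtile C T -> gtile C' T.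
Proof.
move=> E [H1 H2]; split.
  by apply: sub_all H1 => B; rewrite /tok; under eq_forallb => s do rewrite E.
by move=> x; rewrite H2 /inboxb; under eq_forallb => s do rewrite E.
Qed.

Lemma gtile_cat m (C C1 C2 : 'I_m -> {fset nat}) T1 T2 :
  gtile C1 T1 -> gtile C2 T2 -> (forall s, C1 s `<=` C s) -> (forall s, C2 s `<=` C s) ->
  (forall x, (inboxb C x : nat) = (inboxb C1 x + inboxb C2 x)%N) -> gtile C (T1 ++ T2).
Proof.
move=> [A1 N1] [A2 N2] S1 S2 E; split.
  rewrite all_cat; apply/andP; split.
    apply: sub_all A1 => B /forallP H; apply/forallP => s.
    by case/andP: (H s) => h1 h2; rewrite h2 (fsubset_trans h1 (S1 s)).
  apply: sub_all A2 => B /forallP H; apply/forallP => s.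
  by case/andP: (H s) => h1 h2; rewrite h2 (fsubset_trans h1 (S2 s)).
by move=> x; rewrite count_cat N1 N2 E.
Qed.

Lemma gtile_perm m (C : 'I_m -> {fset nat}) T (r : 'S_m) : gtile C T ->
  gtile (fun s => C (r s)) (map (fun B : subbox m => ((r * B.1)%g, fun s => B.2 (r s))) T).
Proof.
move=> [A N]; split.
  rewrite all_map; apply: sub_all A => B /forallP H; apply/forallP => s /=.
  by rewrite permM; apply: H.
move=> x; rewrite count_map.
have -> : inboxb (fun s => C (r s)) x = inboxb C (fun t => x ((r^-1)%g t)).
  rewrite /inboxb -[RHS](forall_perm r); apply: eq_forallb => s /=; by rewrite permK.
rewrite -N; apply: eq_count => B /=; rewrite /insb -[RHS](forall_perm r).
by apply: eq_forallb => s; rewrite permK.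
Qed.

Lemma gtile_map m (C : 'I_m -> {fset nat}) T (f g : 'I_m -> nat -> nat) :
  (forall s, cancel (f s) (g s)) -> gtile C T ->
  gtile (fun s => [fset f s a | a in C s])
        (map (fun B : subbox m => (B.1, fun s => [fset f s a | a in B.2 s])) T).
Proof.
move=> fK [A N]; split.
  rewrite all_map; apply: sub_all A => B /forallP H; apply/forallP => s /=.
  case/andP: (H s) => h1 /eqP h2; rewrite card_imf ?h2 ?eqxx ?andbT; last exact: can_inj (fK s).
  apply/fsubsetP => y; rewrite !(memf _ _ (fK s)) => /andP [-> /=].
  exact: (fsubsetP h1).
move=> x; rewrite count_map.
set c := [forall s, f s (g s (x s)) == x s].
have E : forall (D : 'I_m -> {fset nat}),
  [forall s, x s \in [fset f s a | a in D s]] = c && [forall s, g s (x s) \in D s].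
  move=> D; apply/forallP/andP => [H|[/forallP H1 /forallP H2] s].
    split; apply/forallP => s; by move: (H s); rewrite (memf _ _ (fK s)) => /andP [].
  by rewrite (memf _ _ (fK s)) H1 H2.
rewrite /inboxb E /=.
have -> : count (fun B => insb (B.1, fun s => [fset f s a | a in B.2 s]) x) T =
          count (fun B => c && insb B (fun s => g s (x s))) T.
  by apply: eq_count => B; rewrite /insb E.
by rewrite count_and N; case: (c); rewrite /= ?mul1n ?mul0n.
Qed.

Definition ext1 m' (L : {fset nat}) (C : 'I_m' -> {fset nat}) : 'I_m'.+1 -> {fset nat} :=
  fun s => match unlift ord_max s with Some s' => C s' | None => L end.

Lemma ext1_lift m' L C j : @ext1 m' L C (lift ord_max j) = C j.
Proof. by rewrite /ext1 liftK. Qed.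
Lemma ext1_max m' L C : @ext1 m' L C ord_max = L.
Proof. by rewrite /ext1 unlift_none. Qed.

Lemma gtile_ext1 m' (C : 'I_m' -> {fset nat}) T L : #|` L| = d m' -> gtile C T ->
  gtile (ext1 L C) (map (fun B : subbox m' =>
     (lift_perm ord_max ord_max B.1, ext1 L B.2)) T).
Proof.
move=> cL [A N]; split.
  rewrite all_map; apply: sub_all A => B /forallP H; apply/forallP => s /=.
  case: (unliftP ord_max s) => [j ->|->].
    by rewrite !ext1_lift lift_perm_lift lift_max.
  by rewrite !ext1_max lift_perm_id fsubset_refl cL eqxx.
move=> x; rewrite count_map /inboxb forall_lift.
under eq_forallb => j do rewrite ext1_lift.
rewrite ext1_max andbC.
have -> : count (fun B => insb (lift_perm ord_max ord_max B.1, ext1 L B.2) x) T =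
   count (fun B => (x ord_max \in L) && insb B (fun j => x (lift ord_max j))) T.
  apply: eq_count => B; rewrite /insb /= forall_lift ext1_max andbC.
  by congr andb; apply: eq_forallb => j; rewrite ext1_lift.
by rewrite count_and N; case: (_ \in L); rewrite /= ?mul1n ?mul0n.
Qed.

End Gen.

Definition Bx m' (C0 : 'I_m'.+1 -> {fset nat}) (L : {fset nat}) : 'I_m'.+1 -> {fset nat} :=
  fun s => if s == ord_max then L else C0 s.

Lemma inbox_Bx m' C0 L x : inboxb (@Bx m' C0 L) x =
  [forall j, x (lift ord_max j) \in C0 (lift ord_max j)] && (x ord_max \in L).
Proof.
rewrite /inboxb forall_lift /Bx eqxx; congr andb; apply: eq_forallb => j.
by rewrite eq_sym (negbTE (neq_lift _ _)).
Qed.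

Section Split.
Variable d : nat -> nat.
Variable m' : nat.
Variable C0 : 'I_m'.+1 -> {fset nat}.

Lemma gtile_nilI o : gtile d (Bx C0 (I o 0)) [::].
Proof.
split=> // x; rewrite inbox_Bx in_I addn0.
by case: leqP => //=; rewrite andbF.
Qed.

Lemma split_I o l1 l2 T1 T2 : gtile d (Bx C0 (I o l1)) T1 -> gtile d (Bx C0 (I (o + l1) l2)) T2 ->
  gtile d (Bx C0 (I o (l1 + l2))) (T1 ++ T2).
Proof.
move=> H1 H2; apply: (gtile_cat H1 H2).
- move=> s; rewrite /Bx; case: ifP => _; last exact: fsubset_refl.
  by apply/fsubsetP => y; rewrite !in_I; lia.
- move=> s; rewrite /Bx; case: ifP => _; last exact: fsubset_refl.
  by apply/fsubsetP => y; rewrite !in_I; lia.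
move=> x; rewrite !inbox_Bx !in_I.
case: [forall _, _] => //=.
set y := x ord_max; lia.
Qed.

Lemma rep_I o q a (Tf : nat -> seq (subbox m'.+1)) :
  (forall j, j < a -> gtile d (Bx C0 (I (o + j * q) q)) (Tf j)) ->
  gtile d (Bx C0 (I o (a * q))) (flatten (map Tf (iota 0 a))).
Proof.
elim: a => [|a IHa] H; first by rewrite mul0n; exact: gtile_nilI.
rewrite -[a.+1]addn1 iotaD map_cat flatten_cat /= cats0 mulnDl mul1n.
apply: split_I; first by apply: IHa => j lt; apply: H; lia.
by apply: H; lia.
Qed.
End Split.

Close Scope fset_scope.

Definition CF (F : nat -> nat) m n : 'I_m -> {fset nat} := fun s => I 1 (F (n - m + 1 + s)).
Arguments CF F m n : clear implicits.
Definition dF (F : nat -> nat) j := F j.+1.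

Lemma base0 d (C : 'I_0 -> {fset nat}) : gtile d C [:: subbox0 0].
Proof.
split; first by rewrite /= andbT; apply/forallP => -[].
have E : forall P : pred 'I_0, [forall s, P s] = true by move=> P; apply/forallP => -[].
by move=> x /=; rewrite /insb /inboxb addn0 !E.
Qed.

Lemma basen F n : gtile (dF F) (CF F n n) [:: (1%g, CF F n n)].
Proof.
split; last by move=> x /=; rewrite addn0.
rewrite /= andbT; apply/forallP => s /=.
by rewrite fsubset_refl perm1 /CF card_I subnn add0n add1n eqxx.
Qed.

Definition rotp m : 'S_m := perm (@ordS_inj m).
Arguments rotp m : clear implicits.

Lemma main F (lamK lamM : nat -> nat -> nat)
  (hF : forall k m, 0 < k -> 0 < m -> F (k + m) = lamK k m * F k + lamM k m * F m) :
  forall n m, m <= n -> exists T, gtile (dF F) (CF F m n) T.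
Proof.
elim=> [|n' IH] m le.
  by move: le; rewrite leqn0 => /eqP ->; exists [:: subbox0 0]; exact: base0.
case: m le => [|m'] le; first by exists [:: subbox0 0]; exact: base0.
move: le; rewrite leq_eqVlt => /orP [/eqP E | lt].
  by rewrite E; exists [:: (1%g, CF F n'.+1 n'.+1)]; exact: basen.
set k := n' - m'.
have k0 : 0 < k by rewrite /k; lia.
have [T1 HT1] := IH m'.+1 ltac:(lia).
have [T2 HT2] := IH m' ltac:(lia).
set a := lamK k m'.+1; set b := lamM k m'.+1.
have hFn : F n'.+1 = a * F k + b * F m'.+1.
  by rewrite -hF //; congr F; rewrite /k; lia.
set C := CF F m'.+1 n'.+1.
pose fA j (s : 'I_m'.+1) := if s == ord_max then addn (j * F k) else id.
pose gA j (s : 'I_m'.+1) := if s == ord_max then (fun x => x - j * F k) else id.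
have fAK : forall j s, cancel (fA j s) (gA j s).
  by move=> j s x; rewrite /fA /gA; case: (s == ord_max) => //=; rewrite addKn.
have HA : forall j, j < a -> gtile (dF F) (Bx C (I (1 + j * F k) (F k)))
   (map (fun B : subbox m'.+1 => (B.1, fun s => [fset fA j s x | x in B.2 s]%fset))
     (map (fun B : subbox m'.+1 => ((rotp m'.+1 * B.1)%g, fun s => B.2 (rotp m'.+1 s))) T1)).
  move=> j _; have := gtile_map (fAK j) (gtile_perm (rotp m'.+1) HT1).
  apply: gtile_ext => s; apply/fsetP => y; rewrite (memf _ _ (fAK j s)) /Bx /fA /gA.
  have [->|ne] := eqVneq s ord_max.
    have r0 : (rotp m'.+1 ord_max : nat) = 0 by rewrite permE /= modnn.
    rewrite /CF r0 !in_I.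
    have -> : n' - m'.+1 + 1 + 0 = k by rewrite /k; lia.
    lia.
  have sl : (s : nat) < m' by have := ltn_ord s; move: ne; rewrite -val_eqE /=; lia.
  have r1 : (rotp m'.+1 s : nat) = s.+1 by rewrite permE /= modn_small.
  rewrite /CF /C /CF r1 eqxx /=.
  by have -> : n' - m'.+1 + 1 + s.+1 = n'.+1 - m'.+1 + 1 + s by lia.
have HB : forall j, j < b -> gtile (dF F) (Bx C (I ((1 + a * F k) + j * F m'.+1) (F m'.+1)))
   (map (fun B : subbox m' => (lift_perm ord_max ord_max B.1,
         ext1 (I ((1 + a * F k) + j * F m'.+1) (F m'.+1)) B.2)) T2).
  move=> j _; have := @gtile_ext1 (dF F) m' _ T2 (I ((1 + a * F k) + j * F m'.+1) (F m'.+1)) (card_I _ _) HT2.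
  apply: gtile_ext => s; rewrite /Bx.
  case: (unliftP ord_max s) => [i ->|->]; last by rewrite ext1_max eqxx.
  rewrite ext1_lift eq_sym (negbTE (neq_lift _ _)) /C /CF lift_max.
  by have -> : n'.+1 - m'.+1 + 1 + i = n' - m' + 1 + i by lia.
have := split_I (rep_I HA) (rep_I HB).
move=> H; eexists; apply: gtile_ext H => s.
rewrite /Bx; case: eqP => [->|//].
rewrite /C /CF /=.
have -> : n'.+1 - m'.+1 + 1 + m' = n'.+1 by lia.
by rewrite hFn.
Qed.

Lemma Ffact0 F : Ffact F 0 = 1.
Proof. by rewrite /Ffact big_geq. Qed.
Lemma FfactS F n : Ffact F n.+1 = F n.+1 * Ffact F n.
Proof. by rewrite /Ffact big_nat_recr //= mulnC. Qed.

Lemma adm F (lamK lamM : nat -> nat -> nat)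
  (hF : forall k m, 0 < k -> 0 < m -> F (k + m) = lamK k m * F k + lamM k m * F m) :
  admissible F.
Proof.
elim=> [|n' IH] m le.
  by move: le; rewrite leqn0 => /eqP ->; exists 1; rewrite Ffact0.
case: m le => [|m'] le; first by exists 1; rewrite Ffact0 subn0 mul1n mul1n.
move: le; rewrite leq_eqVlt => /orP [/eqP E | lt].
  by rewrite E subnn Ffact0; exists 1; rewrite muln1 mul1n.
set k := n' - m'.
have k0 : 0 < k by rewrite /k; lia.
have [c1 H1] := IH m'.+1 ltac:(lia).
have [c2 H2] := IH m' ltac:(lia).
have hFn : F n'.+1 = lamK k m'.+1 * F k + lamM k m'.+1 * F m'.+1.
  by rewrite -hF //; congr F; rewrite /k; lia.
rewrite subSS -/k.
move: H1 H2; rewrite -/k.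
have -> : n' - m'.+1 = k.-1 by rewrite /k; lia.
case: k k0 hFn => [//|k'] _ hFn H1 H2.
exists (lamK k'.+1 m'.+1 * c1 + lamM k'.+1 m'.+1 * c2).
rewrite FfactS hFn mulnDl {1}H1 H2 !FfactS /=.
nia.
Qed.

Lemma count2 T (p : pred T) (x0 : T) (s : seq T) i j :
  i < size s -> j < size s -> i <> j -> p (nth x0 s i) -> p (nth x0 s j) -> 1 < count p s.
Proof.
wlog ij : i j / i < j.
  move=> W hi hj ne pi pj; have [l|l|e] := ltngtP i j.
  - exact: (W i j).
  - by apply: (W j i) => // e; apply: ne.
  - by case: ne.
move=> hi hj _ pi pj.
rewrite -(cat_take_drop j s) count_cat.
have h1 : 0 < count p (take j s).
  rewrite -has_count; apply/(has_nthP x0); exists i; first by rewrite size_take; case: ifP.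
  by rewrite nth_take.
have h2 : 0 < count p (drop j s).
  rewrite -has_count; apply/(has_nthP x0); exists 0; first by rewrite size_drop; lia.
  by rewrite nth_drop addn0.
lia.
Qed.

Lemma to_tiling F m n T : gtile (dF F) (CF F m n) T -> tiling F m n T.
Proof.
move=> [A N].
have insbP : forall B x, in_subbox m B x <-> insb B x.
  by move=> B x; split => [H|/forallP H]; [apply/forallP|].
split; [|split].
- move=> i lt; have /forallP H := all_nthP (subbox0 m) A i lt.
  move=> s; case/andP: (H s) => sub /eqP c; split => // a /(fsubsetP sub).
  rewrite /CF in_I; lia.
- move=> i j hi hj ne x [/insbP pi /insbP pj].
  have := @count2 _ (fun B => insb B x) (subbox0 m) T i j hi hj ne pi pj.
  by rewrite N; case: (inboxb _ _).
move=> x.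
have -> : in_Fbox F m n x <-> inboxb (CF F m n) x.
  split=> [H|/forallP H s]; first by apply/forallP => s; rewrite /CF in_I; have := H s; lia.
  by have := H s; rewrite /CF in_I; lia.
split.
  move=> c; have : has (fun B => insb B x) T by rewrite has_count N c.
  by case/(has_nthP (subbox0 m)) => i hi /insbP pi; exists i.
case=> i hi /insbP pi.
have : has (fun B => insb B x) T by apply/(has_nthP (subbox0 m)); exists i.
by rewrite has_count N; case: (inboxb _ _).
Qed.

Theorem theorem1 (F : nat -> nat) :
  Fpos F -> T_lambda F -> cobweb_tiling F.
Proof.
move=> _ [lamK [lamM hF]]; split; first exact: adm hF.
move=> m n _ le; have [T HT] := main hF le.
by exists T; exact: to_tiling.
Qed.
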